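(* Let $r,s,q$ be positive integers. There is a constant $c=c(r,s,q)>0$ such that the following holds. Let $V$ be a set of $N$ vertices and let $\gamma$ be a function assigning to every $r$-element subset $f\subset V$ a vector $\gamma(f)\in\mathbb{R}^s$. Suppose that for every $r$-element subset $f\subset V$ there are at most $q$ $r$-element subsets $f'\subset V$ with $|f\cap f'|=r-1$ such that $|\gamma(f)_i-\gamma(f')_i|<1$ for some $i\in[s]$. Then there is $U\subset V$ with $|U|\ge cN^{1/(2r-1)}$ such that $|\gamma(f)_i-\gamma(f')_i|\ge 1$ for every pair of distinct $r$-element subsets $f,f'\subset U$ and every $i\in[s]$. *)

(* Defs.v *)
From HB Require Import structures.
From mathcomp Require Import all_boot all_order all_algebra.
From mathcomp Require Import all_classical all_reals all_analysis.
Set Implicit Arguments. Unset Strict Implicit. Unset Printing Implicit Defensive.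
Import Order.TTheory GRing.Theory Num.Theory.
Local Open Scope ring_scope.

(* gamma assigns to each (r-element) subset of V a vector in R^s,
   represented as a function 'I_s -> R. *)

Definition close (R : realType) (V : finType) (s : nat)
  (gamma : {set V} -> 'I_s -> R) (f f' : {set V}) : bool :=
  [exists i : 'I_s, `|gamma f i - gamma f' i| < 1].

Definition close_nbrs (R : realType) (V : finType) (r s : nat)
  (gamma : {set V} -> 'I_s -> R) (f : {set V}) : {set {set V}} :=
  [set f' : {set V} | [&& #|f'| == r, #|f :&: f'| == r.-1 & close gamma f f']].

(* Main.v *)
Require Import Defs.
From HB Require Import structures.
From mathcomp Require Import all_boot all_order all_algebra.
From mathcomp Require Import all_classical all_reals all_analysis.
From mathcomp Require Import lra ring zify.
Import Order.TTheory GRing.Theory Num.Theory.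
Local Open Scope ring_scope.
Lemma sum_set_prod (R : comNzRingType) (V : finType) (g : V -> bool -> R) :
  \sum_(S : {set V}) \prod_(v : V) g v (v \in S) = \prod_(v : V) (g v true + g v false).
Proof.
have -> : \prod_(v : V) (g v true + g v false) = \prod_(v : V) \sum_(b : bool) g v b.
  by apply: eq_bigr => v _; rewrite big_bool.
rewrite bigA_distr_bigA.
rewrite (reindex (fun S : {set V} => [ffun v => v \in S])) /=.
  by apply: eq_bigr => S _; apply: eq_bigr => v _; rewrite ffunE.
exists (fun h : {ffun V -> bool} => [set v | h v]) => [S _|h _].
  by apply/setP => v; rewrite inE ffunE.
by apply/ffunP => v; rewrite ffunE inE.
Qed.

Definition wt (R : comNzRingType) (V : finType) (p : R) (S : {set V}) : R :=
  \prod_(v : V) (if v \in S then p else 1 - p).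
Arguments wt {R V}.

Lemma Ewt (R : comNzRingType) (V : finType) (p : R) (W : {set V}) :
  \sum_(S : {set V}) wt p S * (W \subset S)%:R = p ^+ #|W|.
Proof.
pose g v (b : bool) := if v \in W then (if b then p else 0) else (if b then p else 1 - p).
transitivity (\sum_(S : {set V}) \prod_(v : V) g v (v \in S)).
  apply: eq_bigr => S _; rewrite /wt /g.
  case: (boolP (W \subset S)) => hWS.
    rewrite mulr1; apply: eq_bigr => v _.
    by case: (boolP (v \in W)) => // /(fintype.subsetP hWS) ->.
  rewrite mulr0; move/fintype.subsetPn: hWS => [v vW vS].
  by rewrite (bigD1 v) //= vW (negbTE vS) mul0r.
rewrite sum_set_prod /g.
rewrite (eq_bigr (fun v => if v \in W then p else 1)); last first.
  by move=> v _; case: (v \in W); rewrite ?addr0 // addrC subrK.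
by rewrite -big_mkcond prodr_const.
Qed.

Lemma wt_ge0 (R : numDomainType) (V : finType) (p : R) (S : {set V}) :
  0 <= p <= 1 -> 0 <= wt p S.
Proof.
move=> /andP[p0 p1]; apply: prodr_ge0 => v _; case: ifP => // _.
by rewrite subr_ge0.
Qed.

Lemma sum_wt (R : comNzRingType) (V : finType) (p : R) :
  \sum_(S : {set V}) wt p S = 1.
Proof.
have := @Ewt R V p finset.set0; rewrite cards0 expr0 => h; rewrite -[RHS]h.
by apply: eq_bigr => S _; rewrite finset.sub0set mulr1.
Qed.

Lemma Ewt_card (R : comNzRingType) (V : finType) (p : R) :
  \sum_(S : {set V}) wt p S * #|S|%:R = #|V|%:R * p.
Proof.
transitivity (\sum_(v : V) \sum_(S : {set V}) wt p S * ([set v] \subset S)%:R).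
  rewrite exchange_big /=; apply: eq_bigr => S _.
  rewrite -mulr_sumr; congr (_ * _).
  rewrite -sum1_card natr_sum big_mkcond; apply: eq_bigr => v _.
  by rewrite finset.sub1set; case: (v \in S).
rewrite (eq_bigr (fun _ => p)); last by move=> v _; rewrite Ewt finset.cards1 expr1.
by rewrite sumr_const mulr_natl.
Qed.
Lemma card_add1 {V : finType} {T : {set V}} {v : V} {r : nat} :
  (0 < r)%N -> #|T| = r.-1 -> v \notin T -> #|v |: T| = r.
Proof. by move=> r0 hT vT; rewrite cardsU1 vT hT /= add1n prednK. Qed.

Lemma grpX (R : realType) (V : finType) (r s q : nat)
  (gamma : {set V} -> 'I_s -> R) (T X : {set V}) (i : 'I_s) :
  (0 < r)%N ->
  (forall f : {set V}, #|f| = r -> (#|close_nbrs r gamma f| <= q)%N) ->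
  #|T| = r.-1 -> [disjoint X & T] ->
  {in X &, forall v v', `|gamma (v |: T) i - gamma (v' |: T) i| < 1} ->
  (#|X| <= q.+1)%N.
Proof.
move=> r0 H hT dXT hcl.
have [->|[v0 v0X]] := set_0Vmem X; first by rewrite cards0.
have nT v : v \in X -> v \notin T.
  by move=> vX; rewrite (disjointFr dXT vX).
rewrite (cardsD1 v0) v0X add1n ltnS.
have H0 := H (v0 |: T) (card_add1 r0 hT (nT _ v0X)).
apply: leq_trans H0.
rewrite -(@card_in_imset _ _ (fun v => v |: T) (X :\ v0)); last first.
  move=> a b /setD1P[_ aX] /setD1P[_ bX] /= hab.
  have : a \in b |: T by rewrite -hab setU11.
  by rewrite in_setU1 (negbTE (nT _ aX)) orbF => /eqP.
apply: subset_leq_card.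
apply/fintype.subsetP => y.
move=> /imsetP[v /setD1P[vv0 vX] ->].
rewrite inE (card_add1 r0 hT (nT _ vX)) eqxx /=.
apply/andP; split.
  have -> : (v0 |: T) :&: (v |: T) = T.
    apply/setP => z; rewrite !inE.
    case: (boolP (z \in T)) => xT; first by rewrite !orbT.
    rewrite !orbF; apply/negP => /andP[/eqP e1 /eqP e2].
    by move: vv0; rewrite -e2 e1 eqxx.
  by rewrite hT.
by apply/existsP; exists i; apply: hcl.
Qed.
Lemma cover_card (V I : finType) (A : {set V}) (F : I -> {set V}) :
  (forall v, v \in A -> exists i, v \in F i) ->
  (#|A| <= \sum_(i : I) #|F i|)%N.
Proof.
move=> hc.
have e : forall B : {set V}, #|B| = (\sum_(v : V) (v \in B))%N.
  by move=> B; rewrite -sum1_card big_mkcond /=; apply: eq_bigr => v _; case: (v \in B).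
rewrite e (eq_bigr (fun i => \sum_(v : V) (v \in F i))%N); last by move=> i _; rewrite e.
rewrite exchange_big /=; apply: leq_sum => v _.
case: (boolP (v \in A)) => // vA.
have [i vi] := hc v vA.
by rewrite (bigD1 i) //= vi.
Qed.

Lemma nbr_bound (R : realType) (V : finType) (r s q : nat)
  (gamma : {set V} -> 'I_s -> R) (f T : {set V}) :
  (0 < r)%N ->
  (forall f : {set V}, #|f| = r -> (#|close_nbrs r gamma f| <= q)%N) ->
  #|T| = r.-1 ->
  (#|[set v | (v \notin T) && Defs.close gamma f (v |: T)]| <= s * (2 * q.+1))%N.
Proof.
move=> r0 H hT.
pose B i := [set v | (v \notin T) && (gamma f i <= gamma (v |: T) i < gamma f i + 1)].
pose C i := [set v | (v \notin T) && (gamma f i - 1 < gamma (v |: T) i < gamma f i)].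
apply: leq_trans (@cover_card V _ _ (fun i => B i :|: C i) _) _.
  move=> v; rewrite inE => /andP[vT /existsP[i hi]]; exists i.
  move: hi; rewrite ltr_norml => /andP[h1 h2].
  rewrite !inE vT /=.
  case: (lerP (gamma f i) (gamma (v |: T) i)) => h3.
    by apply/orP; left; apply/andP; split => //; lra.
  by apply/orP; right; apply/andP; split => //; lra.
apply: (@leq_trans (\sum_(i : 'I_s) (2 * q.+1))%N).
  2: by rewrite sum_nat_const card_ord.
apply: leq_sum => i _.
rewrite cardsU mul2n -addnn.
apply: leq_trans (leq_subr _ _) _.
have dj : forall P : pred V, [disjoint [set v | (v \notin T) && P v] & T].
  by move=> P; rewrite disjoint_subset; apply/fintype.subsetP => v; rewrite !inE => /andP[vT _].
apply: leq_add.
  apply: (@grpX R V r s q gamma T _ i r0 H hT (dj _)) => v v'; rewrite !inE => /andP[_ /andP[a1 a2]] /andP[_ /andP[b1 b2]].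
  by rewrite ltr_norml; apply/andP; split; lra.
apply: (@grpX R V r s q gamma T _ i r0 H hT (dj _)) => v v'; rewrite !inE => /andP[_ /andP[a1 a2]] /andP[_ /andP[b1 b2]].
by rewrite ltr_norml; apply/andP; split; lra.
Qed.

Lemma prod_if (R : comNzRingType) (V : finType) (A : {set V}) (x : R) :
  \prod_(v : V) (if v \in A then x else 1) = x ^+ #|A|.
Proof. by rewrite -big_mkcond prodr_const. Qed.

Lemma sum_ind (R : comNzRingType) (V : finType) (A : {set V}) :
  \sum_(v : V) ((v \in A)%:R : R) = #|A|%:R.
Proof.
rewrite -sum1_card natr_sum [RHS]big_mkcond.
apply: eq_bigr => v _.
by case: (v \in A).
Qed.

Lemma pair_sum (R : comNzRingType) (V : finType) (p y : R) :
  \sum_(f : {set V}) \sum_(T : {set V}) y ^+ #|f| * y ^+ #|T| * p ^+ #|f :|: T|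
  = (1 + p * (2 * y + y ^+ 2)) ^+ #|V|.
Proof.
pose phi (a b : bool) := (if a then y else 1) * (if b then y else 1) * (if a || b then p else 1).
transitivity (\sum_(f : {set V}) \sum_(T : {set V}) \prod_(v : V) phi (v \in f) (v \in T)).
  apply: eq_bigr => f _; apply: eq_bigr => T _.
  rewrite /phi !big_split /= !prod_if; congr (_ * _).
  rewrite -prod_if; apply: eq_bigr => v _; by rewrite finset.in_setU.
rewrite (eq_bigr (fun f : {set V} => \prod_(v : V) (phi (v \in f) true + phi (v \in f) false))); last first.
  by move=> f _; rewrite (@sum_set_prod _ _ (fun v b => phi (v \in f) b)).
rewrite (@sum_set_prod _ _ (fun v a => phi a true + phi a false)).
rewrite prodr_const.
congr (_ ^+ _); rewrite /phi /=; ring.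
Qed.

Lemma pow_exp (R : realType) (z : R) (n : nat) : 0 <= z -> (1 + z) ^+ n <= expR (n%:R * z).
Proof.
move=> z0; rewrite expRM_natl; apply: lerXn2r.
- by rewrite nnegrE; lra.
- by rewrite nnegrE expR_ge0.
- exact: expR_ge1Dx.
Qed.

Lemma exists_ge (R : realType) (V : finType) (p : R) (Z : {set V} -> R) :
  0 <= p <= 1 -> exists S, \sum_(S' : {set V}) wt p S' * Z S' <= Z S.
Proof.
move=> hp.
have := @arg_maxP _ R {set V} finset.set0 xpredT Z isT.
case=> S _ hS; exists S.
have sw : \sum_(S' : {set V}) wt p S' = 1 by apply: sum_wt.
rewrite -[leRHS]mul1r -sw mulr_suml; apply: ler_sum => S' _.
by apply: ler_wpM2l; [exact: wt_ge0| exact: hS].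
Qed.

Definition bad (R : realType) (V : finType) (r s : nat)
  (gamma : {set V} -> 'I_s -> R) (f T : {set V}) (v : V) : bool :=
  [&& #|f| == r, #|T| == r.-1, v \notin T, v \notin f & Defs.close gamma f (v |: T)].
Arguments bad {R V} r {s} gamma f T v.

Definition cnt (R : realType) (V : finType) (r s : nat)
  (gamma : {set V} -> 'I_s -> R) (S : {set V}) : R :=
  \sum_(f : {set V}) \sum_(T : {set V}) \sum_(v : V)
     ((bad r gamma f T v) && (v |: (f :|: T) \subset S))%:R.
Arguments cnt {R V} r {s} gamma S.

Lemma E_cnt (R : realType) (V : finType) (r s : nat)
  (gamma : {set V} -> 'I_s -> R) (p : R) :
  \sum_(S : {set V}) wt p S * cnt r gamma S =
  \sum_(f : {set V}) \sum_(T : {set V}) \sum_(v : V)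
     (bad r gamma f T v)%:R * p ^+ #|v |: (f :|: T)|.
Proof.
transitivity (\sum_(f : {set V}) \sum_(T : {set V}) \sum_(v : V) \sum_(S : {set V})
   wt p S * ((bad r gamma f T v) && (v |: (f :|: T) \subset S))%:R).
  rewrite /cnt.
  under eq_bigr => S _ do rewrite mulr_sumr.
  rewrite exchange_big; apply: eq_bigr => f _.
  under eq_bigr => S _ do rewrite mulr_sumr.
  rewrite exchange_big; apply: eq_bigr => T _.
  under eq_bigr => S _ do rewrite mulr_sumr.
  by rewrite exchange_big.
apply: eq_bigr => f _; apply: eq_bigr => T _; apply: eq_bigr => v _.
case: (bad r gamma f T v) => /=; last first.
  by rewrite mul0r big1 // => S _; rewrite mulr0.
by rewrite mul1r Ewt.
Qed.

Lemma bad_bound (R : realType) (V : finType) (r s q : nat)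
  (gamma : {set V} -> 'I_s -> R) (p : R) (f T : {set V}) :
  (0 < r)%N -> 0 <= p ->
  (forall f : {set V}, #|f| = r -> (#|close_nbrs r gamma f| <= q)%N) ->
  \sum_(v : V) (bad r gamma f T v)%:R * p ^+ #|v |: (f :|: T)| <=
  (if (#|f| == r) && (#|T| == r.-1) then (s * (2 * q.+1))%:R * p ^+ (#|f :|: T|).+1 else 0).
Proof.
move=> r0 p0 H.
case: ifP => hs; last first.
  rewrite big1 // => v _; rewrite /bad.
  by case/nandP: (negbT hs) => /negbTE -> ; rewrite /= ?andbF mul0r.
move/andP: hs => [/eqP hf /eqP hT].
pose A := [set v | (v \notin T) && Defs.close gamma f (v |: T)].
apply: (@le_trans _ _ (\sum_(v : V) (v \in A)%:R * p ^+ (#|f :|: T|).+1)).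
  apply: ler_sum => v _; rewrite /bad.
  case: (boolP [&& _, _, _, _ & _]) => hb; last by rewrite mul0r mulr_ge0 ?exprn_ge0.
  move/and5P: hb => [_ _ vT vf hc].
  have vA : v \in A by rewrite inE vT hc.
  rewrite vA cardsU1 finset.in_setU negb_or vT vf /= add1n.
  by [].
rewrite -mulr_suml sum_ind ler_wpM2r ?exprn_ge0 // ler_nat.
exact: (@nbr_bound R V r s q gamma f T r0 H hT).
Qed.

Lemma pair_bound (R : realType) (V : finType) (r : nat) (p t : R) :
  (0 < r)%N -> 0 <= p -> 0 < t ->
  \sum_(f : {set V}) \sum_(T : {set V})
     (if (#|f| == r) && (#|T| == r.-1) then p ^+ #|f :|: T| else 0)
  <= t ^+ (r + r.-1) * \sum_(f : {set V}) \sum_(T : {set V})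
       t^-1 ^+ #|f| * t^-1 ^+ #|T| * p ^+ #|f :|: T|.
Proof.
move=> r0 p0 t0.
rewrite mulr_sumr; apply: ler_sum => f _.
rewrite mulr_sumr; apply: ler_sum => T _.
case: ifP => hs; last first.
  have y0 : 0 <= t^-1 by rewrite invr_ge0 ltW.
  by rewrite !mulr_ge0 ?exprn_ge0 // ltW.
move/andP: hs => [/eqP -> /eqP ->].
have e : t ^+ (r + r.-1) * (t^-1 ^+ r * t^-1 ^+ r.-1) = 1.
  by rewrite -exprD -exprMn mulfV ?gt_eqF // expr1n.
by rewrite mulrA e mul1r.
Qed.

Lemma deletion (R : realType) (V : finType) (r s : nat)
  (gamma : {set V} -> 'I_s -> R) (S : {set V}) :
  let D := [set v | [exists f, exists T, (bad r gamma f T v) && (v |: (f :|: T) \subset S)]] in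
  #|S|%:R - cnt r gamma S <= #|S :\: D|%:R /\
  forall f f' : {set V}, f \subset S :\: D -> f' \subset S :\: D ->
    #|f| = r -> #|f'| = r -> f != f' ->
    forall i : 'I_s, 1 <= `|gamma f i - gamma f' i|.
Proof.
move=> D; split.
  have hD : (#|D|%:R : R) <= cnt r gamma S.
    have ex : cnt r gamma S = \sum_(v : V) \sum_(f : {set V}) \sum_(T : {set V})
       ((bad r gamma f T v) && (v |: (f :|: T) \subset S))%:R.
      rewrite /cnt; under eq_bigr => f _ do rewrite exchange_big.
      by rewrite exchange_big.
    rewrite ex -sum_ind; apply: ler_sum => v _.
    case: (boolP (v \in D)) => vD /=; last by rewrite sumr_ge0 // => f _; rewrite sumr_ge0.
    move: vD; rewrite inE => /existsP[f /existsP[T hb]].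
    rewrite (bigD1 f) //= (bigD1 T) //= hb -addrA lerDl addr_ge0 ?sumr_ge0 //.
    by move=> f' _; rewrite sumr_ge0.
  have hc : (#|S| <= #|S :\: D| + #|D|)%N.
    rewrite -(cardsID D S) addnC leq_add2l.
    by apply: subset_leq_card; apply: finset.subsetIr.
  have hc' : (#|S|%:R : R) <= #|S :\: D|%:R + #|D|%:R by rewrite -natrD ler_nat.
  lra.
move=> f f' hf hf' cf cf' neq i.
rewrite leNgt; apply/negP => hi.
have : ~~ (f' \subset f).
  apply/negP => sub; move: neq; rewrite eq_sym.
  by rewrite eqEcard sub cf cf' leqnn.
case/fintype.subsetPn => v vf' vf.
pose T := f' :\ v.
have ef' : v |: T = f' by rewrite finset.setD1K.
have hT : #|T| = r.-1 by rewrite -cf' (cardsD1 v f') vf' add1n.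
have vT : v \notin T by rewrite finset.setD11.
have hb : bad r gamma f T v.
  rewrite /bad cf hT eqxx vT vf /= ef' /Defs.close eqxx /=.
  by apply/existsP; exists i.
have vD : v \in D.
  rewrite inE; apply/existsP; exists f; apply/existsP; exists T; rewrite hb /=.
  apply/fintype.subsetP => x; rewrite finset.in_setU1 finset.in_setU => /or3P[/eqP->|xf|xT].
  - by have := fintype.subsetP hf' v vf'; rewrite finset.in_setD => /andP[].
  - by have := fintype.subsetP hf x xf; rewrite finset.in_setD => /andP[].
  - move: xT; rewrite finset.in_setD1 => /andP[_ xf'].
    by have := fintype.subsetP hf' x xf'; rewrite finset.in_setD => /andP[].
by have := fintype.subsetP hf' v vf'; rewrite finset.in_setD vD.
Qed.

Theorem lemma2p7 (R : realType) (r s q : nat) :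
  (0 < r)%N -> (0 < s)%N -> (0 < q)%N ->
  exists c : R, 0 < c /\
    forall (V : finType) (gamma : {set V} -> 'I_s -> R),
      (forall f : {set V}, #|f| = r -> (#|close_nbrs r gamma f| <= q)%N) ->
      exists U : {set V},
        c * (#|V|%:R) `^ (1 / (2 * r - 1)%:R) <= #|U|%:R /\
        forall f f' : {set V}, f \subset U -> f' \subset U ->
          #|f| = r -> #|f'| = r -> f != f' ->
          forall i : 'I_s, 1 <= `|gamma f i - gamma f' i|.
Proof.
move=> r0 s0 q0.
have n1 : (2 * r - 1)%N = (r + r.-1)%N by lia.
rewrite n1.
set a : R := 1 / (r + r.-1)%:R.
set M : R := (s * (2 * q.+1))%:R.
have M1 : 1 <= M by rewrite /M ler1n muln_gt0 s0.
have e1 : 1 <= expR 3 :> R by rewrite -[X in X <= _]expR0 ler_expR; lra.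
set K : R := M * expR 3.
have K1 : 1 <= K by rewrite /K; nra.
set c : R := ((2 * K)^-1) `^ a / 2.
exists c; split.
  by rewrite /c divr_gt0 // powR_gt0 // invr_gt0; lra.
move=> V gamma H.
set N := #|V|.
set x : R := N%:R / (2 * K).
set t : R := x `^ a.
have N0 : 0 <= N%:R :> R by [].
have x0 : 0 <= x by rewrite /x divr_ge0 //; lra.
have ct : c * N%:R `^ a = t / 2.
  by rewrite /c /t /x powRM ?invr_ge0 //; [ring | lra].
rewrite ct.
have rr0 : (0 < r + r.-1)%N by lia.
have ha : a * (r + r.-1)%:R = 1.
  by rewrite /a mul1r mulVf // pnatr_eq0 -lt0n.
have tpow : t ^+ (r + r.-1) = x.
  by rewrite /t -powR_mulrn ?powR_ge0 // -powRrM ha powRr1.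
have a0 : a != 0 by rewrite /a mul1r invr_eq0 pnatr_eq0 -lt0n.
case: (ltrP t 1) => ht.
  case: (pickP (@predT V)) => [v _ | hV].
    exists [set v]; split; first by rewrite finset.cards1; lra.
    move=> f f' hf hf' cf cf' neq.
    have ef : forall g : {set V}, g \subset [set v] -> #|g| = r -> g = [set v].
      by move=> g hg cg; apply/eqP; rewrite eqEcard hg finset.cards1 cg.
    by move: neq; rewrite (ef f hf cf) (ef f' hf' cf') eqxx.
  have N00 : N = 0%N by rewrite /N -(eq_card0 hV) cardT.
  exists finset.set0; split.
    by rewrite /t /x N00 mul0r powR0 // finset.cards0; lra.
  move=> f f' hf hf' cf cf'.
  move: hf; rewrite finset.subset0 => /eqP ef.
  by move: cf; rewrite ef finset.cards0 => e; move: r0; rewrite -e.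
have tx : t <= x by rewrite -tpow ler_eXnr.
have xN : x <= N%:R.
  rewrite /x ler_pdivrMr; last by lra.
  nra.
have Npos : 0 < N%:R :> R by lra.
set p : R := t / N%:R.
have p0 : 0 <= p by rewrite /p divr_ge0 //; lra.
have p1 : p <= 1 by rewrite /p ler_pdivrMr // mul1r; lra.
have Np : N%:R * p = t by rewrite /p mulrC divfK // gt_eqF.
pose Z (S : {set V}) := #|S|%:R - cnt r gamma S.
have EZ : \sum_(S : {set V}) wt p S * Z S = N%:R * p -
    \sum_(f : {set V}) \sum_(T : {set V}) \sum_(v : V)
     (bad r gamma f T v)%:R * p ^+ #|v |: (f :|: T)|.
  under eq_bigr => S _ do rewrite /Z mulrBr.
  by rewrite sumrB Ewt_card E_cnt.
have Bnd : \sum_(f : {set V}) \sum_(T : {set V}) \sum_(v : V)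
     (bad r gamma f T v)%:R * p ^+ #|v |: (f :|: T)| <= t / 2.
  apply: (@le_trans _ _ (\sum_(f : {set V}) \sum_(T : {set V})
     (if (#|f| == r) && (#|T| == r.-1) then M * p ^+ (#|f :|: T|).+1 else 0))).
    by apply: ler_sum => f _; apply: ler_sum => T _; apply: bad_bound.
  have -> : \sum_(f : {set V}) \sum_(T : {set V})
     (if (#|f| == r) && (#|T| == r.-1) then M * p ^+ (#|f :|: T|).+1 else 0) =
     M * p * \sum_(f : {set V}) \sum_(T : {set V})
     (if (#|f| == r) && (#|T| == r.-1) then p ^+ #|f :|: T| else 0).
    rewrite mulr_sumr; apply: eq_bigr => f _.
    rewrite mulr_sumr; apply: eq_bigr => T _.
    by case: ifP; rewrite ?mulr0 // exprS mulrA.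
  have t0 : 0 < t by lra.
  have Mp0 : 0 <= M * p by apply: mulr_ge0 => //; lra.
  apply: le_trans (ler_wpM2l Mp0 (@pair_bound R V r p t r0 p0 t0)) _.
  rewrite pair_sum.
  have hy : 0 <= p * (2 * t^-1 + t^-1 ^+ 2).
    by apply: mulr_ge0 => //; rewrite addr_ge0 ?exprn_ge0 ?mulr_ge0 ?invr_ge0 //; lra.
  have E1 : (1 + p * (2 * t^-1 + t^-1 ^+ 2)) ^+ N <= expR 3.
    apply: le_trans (@pow_exp R _ N hy) _.
    rewrite ler_expR mulrA Np.
    have -> : t * (2 * t^-1 + t^-1 ^+ 2) = 2 + t^-1.
      by field; rewrite gt_eqF.
    have : t^-1 <= 1 by rewrite invr_le1 ?unitfE ?gt_eqF //.
    lra.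
  have h3 : M * p * (t ^+ (r + r.-1) * (1 + p * (2 * t^-1 + t^-1 ^+ 2)) ^+ N)
         <= M * p * (x * expR 3).
    rewrite tpow; apply: ler_wpM2l => //; apply: ler_wpM2l => //.
  apply: le_trans h3 _.
  suff -> : M * p * (x * expR 3) = t / 2 by [].
  rewrite /x /p /K; field.
  apply/and4P; split.
  - by rewrite gt_eqF // expR_gt0.
  - by rewrite gt_eqF //; have : (0:R) <= q%:R by []; lra.
  - by rewrite pnatr_eq0 -lt0n.
  - by rewrite gt_eqF.
have hp : 0 <= p <= 1 by rewrite p0 p1.
have [S hS] := @exists_ge R V p Z hp.
have [hU good] := @deletion R V r s gamma S.
eexists; split; last exact: good.
move: hU; rewrite -/(Z S) => hU.
lra.
Qed.
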